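(* Let $(X,\le,\ast)$ be a semiframe and let $x\in X$ with $x\neq\bot_X$. The following are equivalent: (1) $x$ is transitive; (2) $x^\ast$ is a completely prime semifilter (an abstract point); (3) $x^\ast$ is a semifilter; (4) $x^\ast$ is compatible; (5) $x^\ast$ is a maximal semifilter.
   Context: A semiframe is a triple $(X,\le,\ast)$ where $(X,\le)$ is a complete join-semilattice (every subset $Y$ has a join $\bigvee Y$; $\bot_X=\bigvee\varnothing$, $\top_X=\bigvee X$) and $\ast\subseteq X\times X$ is a compatibility relation: commutative; $x\ast x$ for every $x\neq\bot_X$; and $x\ast\bigvee Y$ iff $x\ast y$ for some $y\in Y$. A subset $F\subseteq X$ is compatible when $y\ast y'$ for all $y,y'\in F$; up-closed when $y\in F$, $y\le y'$ imply $y'\in F$; a semifilter is a nonempty up-closed compatible subset; it is completely prime when for every (possibly empty) $Y\subseteq X$, $\bigvee Y\in F$ implies $y\in F$ for some $y\in Y$; it is maximal when contained in no strictly larger semifilter. An abstract point is a completely prime semifilter. $x^\ast=\{x'\in X\mid x'\ast x\}$. An element $x$ is transitive when $x\neq\bot_X$ and for all $x',x''$, $x'\ast x$ and $x\ast x''$ imply $x'\ast x''$. *)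

(* Defs.v *)
Section Semiframes.
Context {X : Type} (le : X -> X -> Prop) (join : (X -> Prop) -> X)
        (cmp : X -> X -> Prop).

Definition bot : X := join (fun _ => False).
Definition top : X := join (fun _ => True).

Definition complete_join_semilattice : Prop :=
  (forall x, le x x) /\
  (forall x y z, le x y -> le y z -> le x z) /\
  (forall x y, le x y -> le y x -> x = y) /\
  (forall (Y : X -> Prop) y, Y y -> le y (join Y)) /\
  (forall (Y : X -> Prop) z, (forall y, Y y -> le y z) -> le (join Y) z).

Definition semiframe : Prop :=
  complete_join_semilattice /\
  (forall x y, cmp x y -> cmp y x) /\
  (forall x, x <> bot -> cmp x x) /\
  (forall x (Y : X -> Prop), cmp x (join Y) <-> exists y, Y y /\ cmp x y).

Definition compatible (F : X -> Prop) : Prop :=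
  forall y y', F y -> F y' -> cmp y y'.

Definition up_closed (F : X -> Prop) : Prop :=
  forall y y', F y -> le y y' -> F y'.

Definition semifilter (F : X -> Prop) : Prop :=
  (exists y, F y) /\ up_closed F /\ compatible F.

Definition completely_prime (F : X -> Prop) : Prop :=
  forall Y : X -> Prop, F (join Y) -> exists y, Y y /\ F y.

Definition abstract_point (F : X -> Prop) : Prop :=
  semifilter F /\ completely_prime F.

Definition maximal_semifilter (F : X -> Prop) : Prop :=
  semifilter F /\
  forall G : X -> Prop, semifilter G -> (forall y, F y -> G y) ->
    ~ (exists y, G y /\ ~ F y).

Definition star (x : X) : X -> Prop := fun x' => cmp x' x.

Definition transitive_elt (x : X) : Prop :=
  x <> bot /\ forall x' x'', cmp x' x -> cmp x x'' -> cmp x' x''.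

End Semiframes.

(* Main.v *)
Require Import Defs.

Theorem proposition9p9 (X : Type) (le : X -> X -> Prop)
  (join : (X -> Prop) -> X) (cmp : X -> X -> Prop)
  (HS : semiframe le join cmp) (x : X) (hx : x <> bot join) :
  (transitive_elt join cmp x <-> abstract_point le join cmp (star cmp x)) /\
  (transitive_elt join cmp x <-> semifilter le cmp (star cmp x)) /\
  (transitive_elt join cmp x <-> compatible cmp (star cmp x)) /\
  (transitive_elt join cmp x <-> maximal_semifilter le cmp (star cmp x)).
Proof.
  destruct HS as [[Hrefl [Htr [Hanti [Hub Hlub]]]] [Hsym [Hself Hj]]].
  assert (Hup : up_closed le (star cmp x)).
  { intros y y' Hy Hle. unfold star in *.
    assert (E : join (fun z => z = y \/ z = y') = y').
    { apply Hanti.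
      - apply Hlub. intros z [->| ->]; auto.
      - apply Hub. auto. }
    apply Hsym. rewrite <- E. apply Hj. exists y. split; auto. }
  assert (Hne : exists y, star cmp x y) by (exists x; apply Hself; auto).
  assert (Hcp : completely_prime join (star cmp x)).
  { intros Y HY. unfold star in *. apply Hsym in HY. apply Hj in HY.
    destruct HY as [y [Hy Hc]]. exists y. split; auto. }
  assert (T_C : transitive_elt join cmp x <-> compatible cmp (star cmp x)).
  { split.
    - intros [_ Ht] y y' Hy Hy'. unfold star in *. apply Ht; auto.
    - intros Hc. split; auto. intros x' x'' H1 H2. apply Hc; unfold star; auto. }
  assert (C_S : compatible cmp (star cmp x) <-> semifilter le cmp (star cmp x)).
  { split.
    - intros Hc. repeat split; auto.
    - intros [_ [_ Hc]]. exact Hc. }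
  destruct T_C as [TC CT]. destruct C_S as [CS SC].
  split; [|split; [|split]].
  - split.
    + intros H. split; auto.
    + intros [H _]. auto.
  - split; auto.
  - split; auto.
  - split.
    + intros Ht. assert (Hs := CS (TC Ht)). split; auto.
      intros G [_ [_ HGc]] Hsub [y [Hy Hn]].
      apply Hn. unfold star. apply HGc; auto. apply Hsub. apply Hself; auto.
    + intros [H _]. auto.
Qed.
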